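(* Let $\mathbb{M}$ be a monster model of $T_{\mathrm{Ham}}$ with underlying set $G_\infty$, and let $I=I_1+(c)+I_2$ be an ordered index set with $I_1,I_2$ infinite. Let $(a_ia_i')_{i\in I}$ be an indiscernible sequence from $G\times v(G)$ such that $(a_i)_{i\in I}$ and $(a_i')_{i\in I}$ are each nonconstant, and let $b\in G$ be such that $(a_ia_i')_{i\in I_1+I_2}$ is $b$-indiscernible. If $v(a_i-b)=a_i'$ for all $i\neq c$, then $v(a_c-b)=a_c'$.
   Context: Let $C$ be an ordered field. A Hamel space over $C$ is a $C$-vector space $G$ with two total orderings $<_0,<_1$, each making $G$ an ordered $C$-vector space, and a map $v:G\to G_\infty=G\cup\{\infty\}$ ($G<_0\infty$, $G<_1\infty$) such that for all $x,y\in G$, $\lambda\in C^{\times}$: $v(x)=\infty$ iff $x=0$; $v(x+y)\ge_0\min_0(v(x),v(y))$; $v(\lambda x)=v(x)$; $0<_1x<_1y\Rightarrow v(x)\ge_0v(y)$; $v(v(x))=v(x)$ (with $v(\infty)=\infty$); $v(x)>_10$. It is independent if for all $a_0<_0b_0$, $a_1<_1b_1$ in $G\cup\{\pm\infty\}$ some $z\in G$ has $a_0<_0z<_0b_0$, $a_1<_1z<_1b_1$; dense if for all $a<_0b$ in $G$ some $c$ has $a<_0v(c)<_0b$. $T_{\mathrm{Ham}}$ is the complete theory in the language $\{0,+,(\lambda_c)_{c\in C},<_0,<_1,v,\infty\}$ on universe $G_\infty$ (with $\infty$ absorbing for $+$, $\lambda_c$, $v$) whose models are exactly the independent dense Hamel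 spaces over $C$. Indiscernible means $\emptyset$-indiscernible. *)

(* Defs.v *)
From HB Require Import structures.
From mathcomp Require Import all_boot all_order all_algebra.
Set Implicit Arguments. Unset Strict Implicit. Unset Printing Implicit Defensive.
Import Order.TTheory GRing.Theory Num.Theory.
Local Open Scope ring_scope.

(* Conventions: C is an ordered field (realFieldType), G a C-vector space
   (lmodType C), G_infty = option G with None = infinity.  The two orders
   <_0, <_1 are strict boolean relations on G. *)

Section Hamel.
Variables (C : realFieldType) (G : lmodType C).

Definition ordered_vs (lt : rel G) : Prop :=
  [/\ (forall x, ~~ lt x x),
      (forall x y z, lt x y -> lt y z -> lt x z),
      (forall x y, x != y -> lt x y \/ lt y x),
      (forall x y z, lt x y -> lt (x + z) (y + z)) &
      (forall (l : C) x y, 0 < l -> lt x y -> lt (l *: x) (l *: y))].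

Definition lte (lt : rel G) (a b : option G) : bool :=
  match a, b with
  | Some x, Some y => lt x y
  | Some _, None => true
  | None, _ => false
  end.

Definition lee (lt : rel G) (a b : option G) : bool := (a == b) || lte lt a b.

Definition mine (lt : rel G) (a b : option G) : option G :=
  if lee lt a b then a else b.

Definition vext (v : G -> option G) (a : option G) : option G :=
  match a with Some x => v x | None => None end.

Definition hamel_space (lt0 lt1 : rel G) (v : G -> option G) : Prop :=
  [/\ ordered_vs lt0 /\ ordered_vs lt1,
      (forall x, v x = None <-> x = 0),
      (forall x y, lee lt0 (mine lt0 (v x) (v y)) (v (x + y))),
      (forall (l : C) x, l != 0 -> v (l *: x) = v x) &
      [/\ (forall x y, lt1 0 x -> lt1 x y -> lee lt0 (v y) (v x)),
           (forall x, vext v (v x) = v x) &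
           (forall x, lte lt1 (Some 0) (v x))]].

(* lower / upper bounds in G u {-oo, +oo}: None means -oo (lower) / +oo (upper) *)
Definition above (lt : rel G) (a : option G) (z : G) : bool :=
  if a is Some x then lt x z else true.
Definition below (lt : rel G) (b : option G) (z : G) : bool :=
  if b is Some y then lt z y else true.
Definition bounds_ok (lt : rel G) (a b : option G) : bool :=
  match a, b with Some x, Some y => lt x y | _, _ => true end.

Definition independent (lt0 lt1 : rel G) : Prop :=
  forall a0 b0 a1 b1 : option G,
    bounds_ok lt0 a0 b0 -> bounds_ok lt1 a1 b1 ->
    exists z : G, [/\ above lt0 a0 z, below lt0 b0 z, above lt1 a1 z & below lt1 b1 z].

Definition dense (lt0 : rel G) (v : G -> option G) : Prop :=
  forall a b : G, lt0 a b ->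
    exists c : G, lte lt0 (Some a) (v c) && lte lt0 (v c) (Some b).

Definition THam_model (lt0 lt1 : rel G) (v : G -> option G) : Prop :=
  [/\ hamel_space lt0 lt1 v, independent lt0 lt1 & dense lt0 v].

End Hamel.

Inductive term (C : Type) : Type :=
  | TVar of nat
  | TZero
  | TInf
  | TAdd of term C & term C
  | TScal of C & term C
  | TVal of term C.

Inductive formula (C : Type) : Type :=
  | FEq of term C & term C
  | FLt0 of term C & term C
  | FLt1 of term C & term C
  | FNot of formula C
  | FAnd of formula C & formula C
  | FExists of nat & formula C.

Section Semantics.
Variables (C : realFieldType) (G : lmodType C).
Variables (lt0 lt1 : rel G) (v : G -> option G).

Fixpoint eval (e : nat -> option G) (t : term C) : option G :=
  match t with
  | TVar n => e n
  | TZero => Some 0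
  | TInf => None
  | TAdd t u =>
      match eval e t, eval e u with
      | Some x, Some y => Some (x + y)
      | _, _ => None
      end
  | TScal c t => if eval e t is Some x then Some (c *: x) else None
  | TVal t => vext v (eval e t)
  end.

Definition upd (e : nat -> option G) (n : nat) (x : option G) : nat -> option G :=
  fun k => if k == n then x else e k.

Fixpoint sat (e : nat -> option G) (f : formula C) : Prop :=
  match f with
  | FEq t u => eval e t = eval e u
  | FLt0 t u => lte lt0 (eval e t) (eval e u)
  | FLt1 t u => lte lt1 (eval e t) (eval e u)
  | FNot f => ~ sat e f
  | FAnd f g => sat e f /\ sat e g
  | FExists n f => exists x : option G, sat (upd e n x) f
  end.

(* A finite tuple of indices is
   turned into the assignment  x_{2k} := a_{i_k}, x_{2k+1} := a'_{i_k},
   and all remaining variables are assigned the parameter d. *)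
Variables (disp : Order.disp_t) (I : orderType disp).

Definition tuple_env (a : I -> G) (a' : I -> option G) (d : option G)
  (s : seq I) : nat -> option G :=
  fun k => nth d (flatten [seq [:: Some (a i); a' i] | i <- s]) k.

Definition indiscernible_over (P : pred I) (a : I -> G) (a' : I -> option G)
  (d : option G) : Prop :=
  forall (f : formula C) (s t : seq I),
    size s = size t ->
    sorted (fun i j => (i < j)%O) s -> sorted (fun i j => (i < j)%O) t ->
    all P s -> all P t ->
    (sat (tuple_env a a' d s) f <-> sat (tuple_env a a' d t) f).

End Semantics.

Definition infinite_pred (T : eqType) (P : T -> Prop) : Prop :=
  forall s : seq T, exists x, P x /\ x \notin s.

(* Main.v *)
Require Import Defs.
From HB Require Import structures.
From mathcomp Require Import all_boot all_order all_algebra.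
Import Order.TTheory GRing.Theory Num.Theory.
Local Open Scope ring_scope.

Section Aux.
Variables (C : realFieldType) (G : lmodType C) (lt : rel G).
Hypothesis Hlt : ordered_vs lt.

Lemma lte_irr x : ~~ lte lt x x.
Proof. case: Hlt => irr _ _ _ _; case: x => //= x; exact: irr. Qed.

Lemma lte_trans x y z : lte lt x y -> lte lt y z -> lte lt x z.
Proof.
case: Hlt => _ tr _ _ _.
case: x => [x|] //; case: y => [y|] //; case: z => [z|] //=; exact: tr.
Qed.

Lemma lte_total x y : x != y -> lte lt x y \/ lte lt y x.
Proof.
case: Hlt => _ _ tot _ _.
case: x => [x|]; case: y => [y|] //=; try by [left|right].
move=> H; apply: tot; apply: contra H => /eqP -> //.
Qed.

Lemma lee_lte_F x y : lee lt x y -> lte lt y x -> False.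
Proof.
rewrite /lee; case/orP => [/eqP -> | H1] H2.
  by move: (lte_irr y); rewrite H2.
by move: (lte_irr x); rewrite (@lte_trans x y x H1 H2).
Qed.
End Aux.
Arguments lte_irr {C G lt}.
Arguments lte_trans {C G lt} Hlt {x y z}.
Arguments lte_total {C G lt} Hlt {x y}.
Arguments lee_lte_F {C G lt} Hlt {x y}.

Lemma strict_ultra (C : realFieldType) (G : lmodType C)
  (lt0 lt1 : rel G) (v : G -> option G) :
  hamel_space lt0 lt1 v -> forall x y, lte lt0 (v x) (v y) -> v (x + y) = v x.
Proof.
case=> [[o0 _] _ Hu Hs _] x y Hxy.
have Hny : v (- y) = v y.
  by rewrite -scaleN1r Hs // oppr_eq0 oner_eq0.
have H1 := Hu x y.
rewrite /mine /lee Hxy orbT in H1.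
have H2 := Hu (x + y) (- y).
rewrite addrK Hny in H2.
move: H1; rewrite /lee => /orP [/eqP -> //|H1].
exfalso; move: H2; rewrite /mine.
case: ifP => _ H2.
  exact: (lee_lte_F o0 H2 H1).
exact: (lee_lte_F o0 H2 Hxy).
Qed.

Arguments strict_ultra {C G lt0 lt1 v}.

Theorem lemma5p5 (C : realFieldType) (G : lmodType C)
  (lt0 lt1 : rel G) (v : G -> option G)
  (HM : THam_model lt0 lt1 v)
  (disp : Order.disp_t) (I : orderType disp) (c : I)
  (HI1 : infinite_pred (fun i : I => (i < c)%O))
  (HI2 : infinite_pred (fun i : I => (c < i)%O))
  (a : I -> G) (a' : I -> option G)
  (Ha' : forall i, exists x : G, v x = a' i)
  (Hind : indiscernible_over lt0 lt1 v predT a a' None)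
  (Hnc : exists i j, a i != a j)
  (Hnc' : exists i j, a' i != a' j)
  (b : G)
  (Hb : indiscernible_over lt0 lt1 v (fun i => i != c) a a' (Some b))
  (Hval : forall i, i != c -> v (a i - b) = a' i) :
  v (a c - b) = a' c.
Proof.
case: HM => HH _ _.
have o0 : ordered_vs lt0 by case: HH => [[]].
have SU := strict_ultra HH.
have Hneg : forall x, v (- x) = v x.
  by case: HH => _ _ _ Hs _ x; rewrite -scaleN1r Hs // oppr_eq0 oner_eq0.
have tr : forall f i j k l, (i < j)%O -> (k < l)%O ->
    sat lt0 lt1 v (tuple_env a a' None [:: i; j]) f ->
    sat lt0 lt1 v (tuple_env a a' None [:: k; l]) f.
  move=> f i j k l Hij Hkl; apply Hind => //=; by rewrite ?Hij ?Hkl.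
have [d [Hd _]] := HI1 [::].
have [e [He _]] := HI2 [::].
have Hde : (d < e)%O by apply: lt_trans Hd He.
have dnc : d != c by rewrite lt_eqF.
have enc : e != c by rewrite gt_eqF.
have Hneq : a' d != a' e.
  case: Hnc' => i0 [j0 Hij].
  have Hne : i0 != j0 by apply: contra Hij => /eqP ->.
  case: (ltgtP i0 j0) => Hc; last by rewrite Hc eqxx in Hne.
  - have := tr (FNot (FEq (@TVar C 1) (@TVar C 3))) i0 j0 d e Hc Hde.
    rewrite /tuple_env /= => H; apply/eqP; apply: H; exact/eqP.
  - have := tr (FNot (FEq (@TVar C 1) (@TVar C 3))) j0 i0 d e Hc Hde.
    rewrite /tuple_env /= => H; apply/eqP; apply: H => E; move: Hij; rewrite E eqxx.
  by [].
have vd := Hval d dnc.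
have ve := Hval e enc.
have Ev : forall i j, sat lt0 lt1 v (tuple_env a a' None [:: i; j])
    (FEq (TVal (TAdd (@TVar C 0) (TScal (-1) (@TVar C 2)))) (@TVar C 1)) <->
    v (a i - a j) = a' i.
  by move=> i j; rewrite /tuple_env /= scaleN1r.
have Ev2 : forall i j, sat lt0 lt1 v (tuple_env a a' None [:: i; j])
    (FEq (TVal (TAdd (@TVar C 0) (TScal (-1) (@TVar C 2)))) (@TVar C 3)) <->
    v (a i - a j) = a' j.
  by move=> i j; rewrite /tuple_env /= scaleN1r.
have El : forall i j, sat lt0 lt1 v (tuple_env a a' None [:: i; j])
    (FLt0 (@TVar C 1) (@TVar C 3)) <-> lte lt0 (a' i) (a' j).
  by move=> i j; rewrite /tuple_env /=.
have El' : forall i j, sat lt0 lt1 v (tuple_env a a' None [:: i; j])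
    (FLt0 (@TVar C 3) (@TVar C 1)) <-> lte lt0 (a' j) (a' i).
  by move=> i j; rewrite /tuple_env /=.
case: (lte_total o0 Hneq) => Hdir.
-
  have Hce : lte lt0 (a' c) (a' e).
    by apply: (El c e).1; apply: (tr _ d e c e Hde He); apply: (El d e).2.
  have Hde' : v (a d - a e) = a' d.
    have -> : a d - a e = (a d - b) + - (a e - b).
      by rewrite opprB addrA subrK.
    by rewrite SU vd // Hneg ve.
  have Hce' : v (a c - a e) = a' c.
    by apply: (Ev c e).1; apply: (tr _ d e c e Hde He); apply: (Ev d e).2.
  have -> : a c - b = (a c - a e) + (a e - b) by rewrite addrA subrK.
  by rewrite SU Hce' // ve.
-
  have Hcd : lte lt0 (a' c) (a' d).
    by apply: (El' d c).1; apply: (tr _ d e d c Hde Hd); apply: (El' d e).2.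
  have Hde' : v (a d - a e) = a' e.
    have -> : a d - a e = - (a e - b) + (a d - b).
      by rewrite [RHS]addrC opprB addrA subrK.
    by rewrite SU Hneg ve // vd.
  have Hdc' : v (a d - a c) = a' c.
    by apply: (Ev2 d c).1; apply: (tr _ d e d c Hde Hd); apply: (Ev2 d e).2.
  have -> : a c - b = - (a d - a c) + (a d - b).
    by rewrite opprB addrA subrK.
  by rewrite SU Hneg Hdc' // vd.
Qed.
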